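(* Let $q$ be a prime power and $h,m\ge1$. Suppose that every pair $(f,g)$ of invertible $\mathbb F_q$-linearised polynomials over $\mathbb F_{q^h}$ satisfying property $(Prop_m)$ consists of monomials. Then every $\mathbb F_q$-linear $(n,q^{3h},n-2)_{q^h}$ code $C$ over $\mathbb F_{q^h}$ with $n\ge 3+m$ which has at least three coordinates from which the projections are $\mathbb F_q$-equivalent to linear codes is itself $\mathbb F_q$-equivalent to a linear code.
   Context: An $\mathbb F_q$-linearised polynomial over $\mathbb F_{q^h}$ is $\sum_{l=0}^{h-1}a_lX^{q^l}$ with $a_l\in\mathbb F_{q^h}$, viewed as a map of $\mathbb F_{q^h}$; invertible means bijective; a monomial is one with exactly one nonzero coefficient. Identities $\equiv$ between such polynomials mean equality as maps. Property $(Prop_m)$: $(f,g)$ satisfies it if there exist triples $(a_j,b_j,c_j)\in(\mathbb F_{q^h}^* )^3$, $1\le j\le m$, with $(a_1,b_1,c_1)=(1,1,1)$, such that $a_jf(b_jf^{-1}(X))\equiv g(c_jg^{-1}(X))$ for every $j$, and for all $i\ne j$: $a_i\ne a_j$, $b_i\ne b_j$, $c_i\ne c_j$. An $\mathbb F_q$-linear code over $\mathbb F_{q^h}$ is an $\mathbb F_q$-subspace of $\mathbb F_{q^h}^n$; an $(n,M,d)_{q^h}$ code has $M$ codewords and minimum distance $d$; linear means $\mathbb F_{q^h}$-linear. Two $\mathbb F_q$-linear codes are $\mathbb F_q$-equivalent if one is obtained from the other by permuting coordinates and applying in each coordinate an $\mathbb F_q$-linear bijection of $\mathbb F_{q^h}$.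 The projection of $C$ from position $i$ is $\{(x_1,\dots,x_{i-1},x_{i+1},\dots,x_n):(x_1,\dots,x_{i-1},0,x_{i+1},\dots,x_n)\in C\}$. *)

(* Defs.v *)
From HB Require Import structures.
From mathcomp Require Import all_boot all_order all_algebra all_fingroup.
Set Implicit Arguments. Unset Strict Implicit. Unset Printing Implicit Defensive.
Import GRing.Theory.
Local Open Scope ring_scope.

Section Defs.
Variable L : finFieldType.   (* plays the role of F_{q^h} *)
Variable q : nat.

(* the subfield F_q of L = roots of X^q - X *)
Definition inFq (x : L) : bool := x ^+ q == x.

Definition Fq_linear (phi : L -> L) : Prop :=
  (forall x y, phi (x + y) = phi x + phi y) /\
  (forall c x, inFq c -> phi (c * x) = c * phi x).

Definition linpoly (h : nat) (a : 'I_h -> L) : L -> L :=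
  fun x => \sum_(l < h) a l * x ^+ (q ^ l)%N.

Definition lp_invertible (h : nat) (a : 'I_h -> L) : Prop := bijective (linpoly a).

Definition lp_monomial (h : nat) (a : 'I_h -> L) : Prop :=
  #|[set l | a l != 0]| = 1%N.

(* property (Prop_m); inverses are the inverse maps (finv) of the bijections *)
Definition Prop_m (h m : nat) (f g : 'I_h -> L) : Prop :=
  exists A B C : 'I_m -> L,
    [/\ (forall j, [/\ A j != 0, B j != 0 & C j != 0]),
        (forall j : 'I_m, val j = 0%N -> [/\ A j = 1, B j = 1 & C j = 1]),
        (forall j x, A j * linpoly f (B j * finv (linpoly f) x)
                     = linpoly g (C j * finv (linpoly g) x)) &
        [/\ injective A, injective B & injective C]].

Definition Fq_code (n : nat) (C : {set 'rV[L]_n}) : Prop :=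
  [/\ 0 \in C,
      (forall x y, x \in C -> y \in C -> x + y \in C) &
      (forall c x, inFq c -> x \in C -> c *: x \in C)].

Definition lin_code (n : nat) (C : {set 'rV[L]_n}) : Prop :=
  [/\ 0 \in C,
      (forall x y, x \in C -> y \in C -> x + y \in C) &
      (forall c x, x \in C -> c *: x \in C)].

Definition hdist (n : nat) (x y : 'rV[L]_n) : nat :=
  #|[set i : 'I_n | x ord0 i != y ord0 i]|.

Definition min_dist (n : nat) (C : {set 'rV[L]_n}) (d : nat) : Prop :=
  (exists x y, [/\ x \in C, y \in C, x != y & hdist x y = d]) /\
  (forall x y, x \in C -> y \in C -> x != y -> (d <= hdist x y)%N).

Definition Fq_equiv (n : nat) (C D : {set 'rV[L]_n}) : Prop :=
  exists (s : 'S_n) (phi : 'I_n -> L -> L),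
    (forall i, Fq_linear (phi i) /\ bijective (phi i)) /\
    D = [set \row_i phi i (x ord0 (s i)) | x : 'rV[L]_n in C].

Definition equiv_to_linear (n : nat) (C : {set 'rV[L]_n}) : Prop :=
  exists D : {set 'rV[L]_n}, lin_code D /\ Fq_equiv C D.

Definition skip (n : nat) (i : 'I_n) (j : 'I_n.-1) : 'I_n := insubd i (bump i j).

Definition proj (n : nat) (C : {set 'rV[L]_n}) (i : 'I_n) : {set 'rV[L]_n.-1} :=
  [set \row_(j < n.-1) x ord0 (skip i j) | x : 'rV[L]_n in [set x in C | x ord0 i == 0]].

End Defs.

(* Main.v *)
Require Import Defs.
From HB Require Import structures.
From mathcomp Require Import all_boot all_order all_algebra all_fingroup all_field.
From mathcomp Require Import ring zify.
Set Implicit Arguments. Unset Strict Implicit. Unset Printing Implicit Defensive.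
Import GRing.Theory.
Local Open Scope ring_scope.

Section FF.
Variables (L : finFieldType) (p k h : nat).
Hypotheses (pP : prime p) (k0 : (0 < k)%N) (h0 : (0 < h)%N)
  (Lcard : #|L| = ((p ^ k) ^ h)%N).
Local Notation q := (p ^ k)%N.

Lemma pchar_L : p \in [pchar L].
Proof. apply: (@card_finPcharP _ _ (k * h)) => //; by rewrite Lcard -expnM. Qed.

Lemma frobD_p j (x y : L) : (x + y) ^+ (p ^ j) = x ^+ (p ^ j) + y ^+ (p ^ j).
Proof.
elim: j => [|j IH]; first by rewrite !expr1.
rewrite expnSr !exprM IH.
by have := pFrobenius_autD_comm pchar_L (mulrC (x ^+ (p ^ j)) (y ^+ (p ^ j))).
Qed.

Lemma frobD_q l (x y : L) : (x + y) ^+ (q ^ l) = x ^+ (q ^ l) + y ^+ (q ^ l).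
Proof. by rewrite -expnM frobD_p. Qed.

Lemma q_gt1 : (1 < q)%N.
Proof. by rewrite -{1}(expn0 p) ltn_exp2l ?prime_gt1. Qed.

Lemma frobN_q l (x : L) : (- x) ^+ (q ^ l) = - x ^+ (q ^ l).
Proof.
apply/eqP; rewrite -subr_eq0 opprK -frobD_q addNr expr0n.
by rewrite /= eqn0Ngt expn_gt0 (ltnW q_gt1).
Qed.

Lemma fix_q_pow (c : L) l : c ^+ q = c -> c ^+ (q ^ l) = c.
Proof. by move=> cq; elim: l => [|l IH]; rewrite ?expr1 // expnS exprM cq. Qed.

Lemma expf_q_card (x : L) : x ^+ (q ^ h) = x.
Proof. by rewrite -Lcard expf_card. Qed.

Lemma frob_inj l : injective (fun x : L => x ^+ (q ^ l)).
Proof.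
move=> x y /= /eqP; rewrite -subr_eq0 -frobN_q -frobD_q expf_eq0 subr_eq0.
by case/andP=> _ /eqP.
Qed.


Definition Fqs : {set L} := [set c : L | c ^+ q == c].

Lemma linpolyD (a : 'I_h -> L) x y : linpoly q a (x + y) = linpoly q a x + linpoly q a y.
Proof. by rewrite /linpoly -big_split /=; apply: eq_bigr => l _; rewrite frobD_q mulrDr. Qed.

Lemma linpolyZ (a : 'I_h -> L) c x : c ^+ q = c -> linpoly q a (c * x) = c * linpoly q a x.
Proof.
move=> cq; rewrite /linpoly mulr_sumr; apply: eq_bigr => l _.
by rewrite exprMn (fix_q_pow _ cq) mulrCA.
Qed.

Lemma linpoly_Fqlin (a : 'I_h -> L) : Fq_linear q (linpoly q a).
Proof. split; [exact: linpolyD | by move=> c x /eqP; apply: linpolyZ]. Qed.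

Lemma root_count (c : 'I_h -> L) (S : {set L}) :
  (forall x, x \in S -> \sum_(l < h) c l * x ^+ (q ^ l) = 0) ->
  (exists l, c l != 0) -> (#|S| <= q ^ h.-1)%N.
Proof.
move=> Sr [l0 cl0].
pose P : {poly L} := \sum_(l < h) c l *: 'X^(q ^ l).
have hornP x : P.[x] = \sum_(l < h) c l * x ^+ (q ^ l).
  by rewrite /P horner_sum; apply: eq_bigr => l _; rewrite hornerZ hornerXn.
have coefP (l : 'I_h) : P`_(q ^ l) = c l.
  rewrite /P coef_sum (bigD1 l) //= coefZ coefXn eqxx mulr1 big1 ?addr0 //.
  move=> j jl; rewrite coefZ coefXn.
  have -> : (q ^ l == q ^ j)%N = false.
    by apply/negbTE; apply: contra jl => /eqP/(expnI q_gt1) e; apply/eqP/val_inj.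
  by rewrite mulr0.
have P0 : P != 0 by apply: contra cl0 => /eqP P0; rewrite -coefP P0 coef0.
have szP : (size P <= (q ^ h.-1).+1)%N.
  apply: leq_trans (size_sum _ _ _) _.
  apply/bigmax_leqP => l _; apply: leq_trans (size_scale_leq _ _) _.
  rewrite size_polyXn ltnS leq_exp2l ?q_gt1 //.
  by rewrite -ltnS prednK // ltn_ord.
have := max_poly_roots P0 (rs := enum S).
rewrite enum_uniq cardE => /(_ _ isT) H.
rewrite -ltnS; apply: leq_trans szP; apply: H.
by apply/allP => x; rewrite mem_enum => xS; rewrite /root hornP Sr.
Qed.


Lemma frobD1 (x y : L) : (x + y) ^+ q = x ^+ q + y ^+ q.
Proof. by have := frobD_q 1 x y; rewrite expn1. Qed.
Lemma frobN1 (x : L) : (- x) ^+ q = - x ^+ q.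
Proof. by have := frobN_q 1 x; rewrite expn1. Qed.

Lemma inFqE c : (c \in Fqs) = (c ^+ q == c).
Proof. by rewrite inE. Qed.

Lemma Fqs0 : 0 \in Fqs. Proof. by rewrite inFqE expr0n eqn0Ngt (ltnW q_gt1). Qed.
Lemma Fqs1 : 1 \in Fqs. Proof. by rewrite inFqE expr1n. Qed.
Lemma FqsD c d : c \in Fqs -> d \in Fqs -> c + d \in Fqs.
Proof. by rewrite !inFqE frobD1 => /eqP-> /eqP->. Qed.
Lemma FqsN c : c \in Fqs -> - c \in Fqs.
Proof. by rewrite !inFqE frobN1 => /eqP->. Qed.
Lemma FqsM c d : c \in Fqs -> d \in Fqs -> c * d \in Fqs.
Proof. by rewrite !inFqE exprMn => /eqP-> /eqP->. Qed.
Lemma FqsV c : c \in Fqs -> c^-1 \in Fqs.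
Proof. by rewrite !inFqE exprVn => /eqP->. Qed.

Lemma ker_im (N : L -> L) : (forall x y, N (x + y) = N x + N y) ->
  (#|L| <= #|[set x | N x == 0%R]| * #|[set N x | x in L]|)%N.
Proof.
move=> ND.
have N0 : N 0 = 0 by have e := ND 0 0; rewrite addr0 in e; apply: (addrI (N 0)); rewrite -e addr0.
have NN x : N (- x) = - N x by apply/eqP; rewrite -subr_eq0 opprK -ND addNr N0.
pose r y := odflt 0 [pick z | N z == y].
have rP x : N (r (N x)) = N x.
  rewrite /r; case: pickP => [z /eqP //|/(_ x)]; by rewrite eqxx.
pose F x := (x - r (N x), N x).
have Finj : injective F.
  move=> x y [e1 e2]; by move: e1; rewrite e2 => /addIr.
rewrite -cardsX -(card_imset _ Finj); apply: subset_leq_card.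
apply/subsetP => _ /imsetP [x _ ->]; rewrite inE /= !inE.
by rewrite ND NN rP subrr eqxx /= imset_f.
Qed.

Lemma Fqs_card : (q <= #|Fqs|)%N.
Proof.
pose N (x : L) := x ^+ q - x.
have ND x y : N (x + y) = N x + N y by rewrite /N frobD1 opprD addrACA.
have := ker_im ND.
have -> : [set x | N x == 0] = Fqs by apply/setP => x; rewrite inE inFqE subr_eq0.
set Im := [set N x | x in L].
have ImT : (#|Im| <= q ^ h.-1)%N.
  apply: (root_count (c := fun _ => 1)); last by exists (Ordinal h0); exact: oner_neq0.
  move=> _ /imsetP [x _ ->].
  under eq_bigr => l _ do rewrite mul1r /N frobD_q frobN_q -exprM -expnS.
  rewrite -(big_mkord xpredT (fun l => x ^+ (q ^ l.+1) - x ^+ (q ^ l))).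
  by rewrite telescope_sumr // expf_q_card expn0 expr1 subrr.
rewrite Lcard => H.
have X0 : (0 < q ^ h.-1)%N by rewrite expn_gt0 (ltnW q_gt1).
rewrite -(leq_pmul2r X0) -expnS prednK //.
by apply: leq_trans H _; rewrite leq_mul2l ImT orbT.
Qed.


Fixpoint span (s : seq L) : {set L} :=
  if s is x :: s' then [set u.1 * x + u.2 | u in setX Fqs (span s')] else [set 0].

Lemma span_closed s :
  [/\ 0 \in span s, (forall y z, y \in span s -> z \in span s -> y + z \in span s) &
      (forall c y, c \in Fqs -> y \in span s -> c * y \in span s)].
Proof.
elim: s => [|x s [S0 SD SZ]] /=.
  split; [by rewrite inE | by move=> y z; rewrite !inE => /eqP-> /eqP->; rewrite addr0
         | by move=> c y _; rewrite !inE => /eqP->; rewrite mulr0].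
split.
- apply/imsetP; exists (0, 0); [by rewrite inE /= Fqs0 S0 | by rewrite /= mul0r addr0].
- move=> _ _ /imsetP [[c y] /setXP [cF yS] ->] /imsetP [[d z] /setXP [dF zS] ->] /=.
  apply/imsetP; exists (c + d, y + z); first by rewrite inE /= FqsD ?SD.
  by rewrite /= mulrDl addrACA.
- move=> d _ dF /imsetP [[c y] /setXP [cF yS] ->] /=.
  apply/imsetP; exists (d * c, d * y); first by rewrite inE /= FqsM ?SZ.
  by rewrite /= mulrDr mulrA.
Qed.

Lemma card_span_cons x s : x \notin span s -> #|span (x :: s)| = (#|Fqs| * #|span s|)%N.
Proof.
move=> xn; rewrite /= card_in_imset ?cardsX //.
move=> [c y] [d z] /setXP [cF yS] /setXP [dF zS] /= e.
have [cd|cd] := eqVneq c d.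
  by rewrite cd in e *; rewrite (addrI _ e).
case/negP: xn.
have cd0 : c - d != 0 by rewrite subr_eq0.
have e2 : (c - d) * x = z - y.
  by rewrite mulrBl (canRL (addrK y) e); ring.
have [_ SD SZ] := span_closed s.
have -> : x = (c - d)^-1 * (z - y) by rewrite -e2 mulKf.
apply: (SZ); first by apply: FqsV; apply: FqsD => //; apply: FqsN.
by apply: (SD) => //; rewrite -mulN1r; apply: (SZ) => //; apply: FqsN; apply: Fqs1.
Qed.



Lemma greedy : exists s, span s = [set: L] /\ #|span s| = (#|Fqs| ^ size s)%N.
Proof.
have r2 : (1 < #|Fqs|)%N by apply: leq_trans q_gt1 Fqs_card.
suff H : forall fuel s, #|span s| = (#|Fqs| ^ size s)%N ->
    (#|L| - #|span s| < fuel)%N ->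
    exists s, span s = [set: L] /\ #|span s| = (#|Fqs| ^ size s)%N.
  by apply: (H (#|L|.+1) [::]); rewrite /= ?cards1 ?expn0 // ltnS leq_subr.
elim=> [//|fuel IH] s Hs Hf.
case: (pickP (fun x => x \notin span s)) => [x xn|none].
  apply: (IH (x :: s)); first by rewrite card_span_cons //= Hs expnS.
  have lt1 : (#|span s| < #|span (x :: s)|)%N.
    rewrite card_span_cons // -{1}(mul1n #|span s|) ltn_mul2r r2 andbT.
    by rewrite card_gt0; apply/set0Pn; exists 0; case: (span_closed s).
  have le2 : (#|span (x :: s)| <= #|L|)%N by apply: max_card.
  lia.
exists s; split => //; apply/setP => x; rewrite inE.
by have := none x; rewrite /= => /negbFE.
Qed.

Definition Fqlinb (T : {ffun L -> L}) : bool :=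
  [forall x, forall y, T (x + y) == T x + T y] &&
  [forall c, forall x, (c \in Fqs) ==> (T (c * x) == c * T x)].

Lemma Fqlinb_span (T T' : {ffun L -> L}) s : Fqlinb T -> Fqlinb T' ->
  (forall x, x \in s -> T x = T' x) -> forall z, z \in span s -> T z = T' z.
Proof.
move=> /andP [/forallP TD /forallP TZ] /andP [/forallP T'D /forallP T'Z].
elim: s => [|x s IH] Hs z /=.
  rewrite inE => /eqP->.
  have z0 (U : {ffun L -> L}) : (forall x y, U (x + y) == U x + U y) -> U 0 = 0.
    move=> UD; have e := eqP (UD 0 0); rewrite addr0 in e.
    by apply: (addrI (U 0)); rewrite -e addr0.
  by rewrite !z0 // => a b; [apply: (forallP (T'D a)) | apply: (forallP (TD a))].
move=> /imsetP [[c y] /setXP [cF yS] ->] /=.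
have /forallP/(_ y)/eqP -> := TD (c * x); have /forallP/(_ y)/eqP -> := T'D (c * x).
have /forallP/(_ x)/implyP/(_ cF)/eqP -> := TZ c.
have /forallP/(_ x)/implyP/(_ cF)/eqP -> := T'Z c.
rewrite Hs ?mem_head // IH // => w ws; apply: Hs; by rewrite in_cons ws orbT.
Qed.


Lemma linpoly_inj (a b : 'I_h -> L) : (forall x, linpoly q a x = linpoly q b x) -> a =1 b.
Proof.
move=> e l; apply/eqP; rewrite -subr_eq0; apply/negPn/negP => nz.
have := @root_count (fun l => a l - b l) [set: L].
rewrite cardsT Lcard leqNgt ltn_exp2l ?q_gt1 // ltn_predL h0.
move=> H; suff Hx : forall x, x \in [set: L] -> \sum_(l0 < h) (a l0 - b l0) * x ^+ (q ^ l0) = 0.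
  by have := H Hx (ex_intro _ l nz).
move=> x _; under eq_bigr => j _ do rewrite mulrBl.
by rewrite sumrB -/(linpoly q a x) -/(linpoly q b x) e subrr.
Qed.

Lemma rep_lin (T : L -> L) : Fq_linear q T -> exists a : 'I_h -> L, forall x, linpoly q a x = T x.
Proof.
move=> [TD TZ].
pose W := [set U : {ffun L -> L} | Fqlinb U].
pose LP := [set [ffun x => linpoly q a x] | a : {ffun 'I_h -> L}].
have LPW : LP \subset W.
  apply/subsetP => _ /imsetP [a _ ->]; rewrite inE; apply/andP; split.
    by apply/forallP => x; apply/forallP => y; rewrite !ffunE linpolyD.
  apply/forallP => c; apply/forallP => x; apply/implyP; rewrite inFqE => /eqP cq.
  by rewrite !ffunE linpolyZ.
have cardLP : #|LP| = (#|L| ^ h)%N.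
  rewrite card_imset ?card_ffun ?card_ord //.
  move=> a b e; apply/ffunP => l; apply: linpoly_inj l => x.
  by have := congr1 (fun U : {ffun L -> L} => U x) e; rewrite !ffunE.
have [s [sT scard]] := greedy.
have cardW : (#|W| <= #|L| ^ h)%N.
  pose G (U : {ffun L -> L}) : {ffun 'I_(size s) -> L} := [ffun i : 'I_(size s) => U (nth 0 s i)].
  have Ginj : {in W &, injective G}.
    move=> U U'; rewrite !inE => UW U'W e; apply/ffunP => x.
    apply: (Fqlinb_span (s := s) UW U'W); last by rewrite sT inE. move=> y ys.
    have := congr1 (fun V : {ffun 'I_(size s) -> L} => V (Ordinal (etrans (index_mem y s) ys))) e.  
    by rewrite !ffunE /= nth_index.
  rewrite -(card_in_imset Ginj); apply: leq_trans (max_card _) _.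
  rewrite card_ffun card_ord leq_exp2l //; last first.
    by rewrite Lcard -{1}(expn0 q) ltn_exp2l ?q_gt1.
  have r2 : (1 < #|Fqs|)%N by apply: leq_trans q_gt1 Fqs_card.
  rewrite -(leq_exp2l _ _ r2) -scard sT cardsT Lcard.
  by rewrite leq_exp2r ?Fqs_card.
have LPeq : LP = W by apply/eqP; rewrite eqEcard LPW cardLP cardW.
have : [ffun x => T x] \in W.
  rewrite inE; apply/andP; split.
    by apply/forallP => x; apply/forallP => y; rewrite !ffunE TD.
  apply/forallP => c; apply/forallP => x; apply/implyP => cF.
  by rewrite !ffunE TZ // /inFq -inFqE.
rewrite -LPeq => /imsetP [a _ e]; exists a => x.
by have := congr1 (fun V : {ffun L -> L} => V x) e; rewrite !ffunE.
Qed.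


Lemma mono_semi (a : 'I_h -> L) : lp_monomial a ->
  exists e : nat, forall b x, linpoly q a (b * x) = b ^+ e * linpoly q a x.
Proof.
rewrite /lp_monomial => /eqP /cards1P [l0 e1].
have al l : l != l0 -> a l = 0.
  move=> ll; apply/eqP; apply: contraR ll => al.
  have : l \in [set l | a l != 0] by rewrite inE.
  by rewrite e1 inE.
exists (q ^ l0)%N => b x; rewrite /linpoly (bigD1 l0) // [in RHS](bigD1 l0) //= !big1 ?addr0.
- by rewrite exprMn mulrCA.
- by move=> l /al ->; rewrite mul0r.
- by move=> l /al ->; rewrite mul0r.
Qed.

End FF.

Lemma lin0 (L : finFieldType) q (T : L -> L) : Fq_linear q T -> T 0 = 0.
Proof.
case=> TD _; have e := TD 0 0; rewrite addr0 in e.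
by apply: (addrI (T 0)); rewrite -e addr0.
Qed.

Lemma linN (L : finFieldType) q (T : L -> L) x : Fq_linear q T -> T (- x) = - T x.
Proof.
move=> Tl; apply/eqP; rewrite -subr_eq0 opprK; case: (Tl) => TD _.
by rewrite -TD addNr (lin0 Tl).
Qed.

Lemma lin_inj0 (L : finFieldType) q (T : L -> L) x : Fq_linear q T -> injective T ->
  x != 0 -> T x != 0.
Proof. by move=> Tl Ti nx; apply: contra nx => /eqP e; apply/eqP; apply: Ti; rewrite e (lin0 Tl). Qed.

Section Core.
Variables (L : finFieldType) (I : finType) (K : pred I).
Variables (A B Cc : I -> L -> L) (X1 X2 X1i Phi1 Phi1i Phi3 Th2 Th2i Th3 Th3i : L -> L).
Variables (tau sig rho : I -> L) (k0 : I).
Hypotheses (HAB : forall t, K t -> forall x y, (A t x == B t y) = (X1 x == tau t * X2 y))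
  (HAC : forall t, K t -> forall x z, (A t x == Cc t z) = (Phi1 x == sig t * Phi3 z))
  (HBC : forall t, K t -> forall y z, (B t y == Cc t z) = (Th2 y == rho t * Th3 z))
  (sA : forall t, K t -> forall w, exists x, A t x = w)
  (sB : forall t, K t -> forall w, exists y, B t y = w)
  (X1K : cancel X1 X1i) (Phi1K : cancel Phi1 Phi1i) (Phi1K' : cancel Phi1i Phi1)
  (Th2K : cancel Th2 Th2i) (Th3K' : cancel Th3i Th3)
  (Kk0 : K k0) (tau0 : tau k0 != 0) (sig0 : sig k0 != 0) (rho0 : rho k0 != 0).

Definition fcore v := tau k0 * X2 (Th2i (rho k0 * v)).
Definition gcore u := X1 (Phi1i (sig k0 * u)).

Lemma core t u v : K t -> gcore u = fcore v ->
  gcore (sig t / sig k0 * u) = tau t / tau k0 * fcore (rho t / rho k0 * v).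
Proof.
move=> Kt e.
set z := Th3i v.
have [x0 ex0] := sA Kk0 (Cc k0 z); have [y0 ey0] := sB Kk0 (Cc k0 z).
have h1 : Phi1 x0 = sig k0 * Phi3 z by apply/eqP; rewrite -HAC // ex0.
have h2 : X1 x0 = tau k0 * X2 y0 by apply/eqP; rewrite -HAB // ex0 ey0.
have h3 : Th2 y0 = rho k0 * v by rewrite -[v]Th3K' -/z; apply/eqP; rewrite -HBC // ey0.
have uE : u = Phi3 z.
  move: e; rewrite /gcore /fcore -h3 Th2K -h2 => /(can_inj X1K) e.
  apply: (mulfI sig0); rewrite -h1 -e Phi1K' //.
have [x ex] := sA Kt (Cc t z); have [y ey] := sB Kt (Cc t z).
have g1 : Phi1 x = sig t * u by rewrite uE; apply/eqP; rewrite -HAC // ex.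
have g2 : X1 x = tau t * X2 y by apply/eqP; rewrite -HAB // ex ey.
have g3 : Th2 y = rho t * v by rewrite -[v]Th3K' -/z; apply/eqP; rewrite -HBC // ey.
have E1 : sig k0 * (sig t / sig k0) = sig t by field.
have E2 : rho k0 * (rho t / rho k0) = rho t by field.
have E3 : tau t / tau k0 * tau k0 = tau t by field.
rewrite /gcore /fcore mulrA E1 -g1 Phi1K g2 mulrA E3 mulrA E2 -g3 Th2K //.
Qed.

End Core.

Lemma lin_inv (L : finFieldType) q (T Ti : L -> L) : Fq_linear q T -> cancel T Ti -> cancel Ti T ->
  Fq_linear q Ti.
Proof.
move=> [TD TZ] K1 K2; split => [x y|c x cq]; apply: (can_inj K1).
  by rewrite TD !K2.
by rewrite TZ // !K2.
Qed.

Lemma lin_comp (L : finFieldType) q (T U : L -> L) : Fq_linear q T -> Fq_linear q U ->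
  Fq_linear q (fun x => T (U x)).
Proof.
move=> [TD TZ] [UD UZ]; split => [x y|c x cq]; first by rewrite UD TD.
by rewrite UZ // TZ.
Qed.

Lemma lin_scl (L : finFieldType) q (T : L -> L) lam : Fq_linear q T ->
  Fq_linear q (fun x => lam * T x).
Proof.
move=> [TD TZ]; split => [x y|c x cq]; first by rewrite TD mulrDr.
by rewrite TZ // mulrCA.
Qed.

Lemma lin_scr (L : finFieldType) q (T : L -> L) lam : Fq_linear q T ->
  Fq_linear q (fun x => T (lam * x)).
Proof.
move=> [TD TZ]; split => [x y|c x cq]; first by rewrite mulrDr TD.
by rewrite mulrCA (TZ _ _ cq).
Qed.

Section Code.
Variables (L : finFieldType) (q n : nat) (C : {set 'rV[L]_n}).
Hypotheses (n4 : (4 <= n)%N) (C0 : 0 \in C)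
  (CD : forall x y, x \in C -> y \in C -> x + y \in C)
  (CZ : forall c x, inFq q c -> x \in C -> c *: x \in C)
  (Cm1 : inFq q (-1 : L))
  (Cmin : forall x y, x \in C -> y \in C -> x != y -> (n - 2 <= hdist x y)%N)
  (Ccard : #|C| = (#|L| ^ 3)%N).

Lemma CN x : x \in C -> - x \in C.
Proof. by move=> xC; rewrite -scaleN1r CZ. Qed.
Lemma CB x y : x \in C -> y \in C -> x - y \in C.
Proof. by move=> xC yC; rewrite CD ?CN. Qed.

Definition dist3 (a b c : 'I_n) := [&& a != b, a != c & b != c].

Lemma agree3 (x y : 'rV[L]_n) a b c : dist3 a b c -> x \in C -> y \in C ->
  x ord0 a = y ord0 a -> x ord0 b = y ord0 b -> x ord0 c = y ord0 c -> x = y.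
Proof.
case/and3P => ab ac bc xC yC ea eb ec; apply/eqP/negPn/negP => xy.
have := Cmin xC yC xy; rewrite /hdist.
set S := [set i | _].
have SZ : S :&: [set a; b; c] = set0.
  apply/setP => i; rewrite !inE.
  have [->|_] := eqVneq i a; first by rewrite ea eqxx.
  have [->|_] := eqVneq i b; first by rewrite eb eqxx.
  have [->|_] := eqVneq i c; first by rewrite ec eqxx.
  by rewrite andbF.
have cZ : #|[set a; b; c]| = 3%N.
  rewrite -setUA cardsU1 cards2 bc !inE negb_or ab ac //.
have := cardsUI S [set a; b; c]; rewrite SZ cards0 addn0 cZ.
have : (#|S :|: [set a; b; c]| <= n)%N by apply: leq_trans (max_card _) _; rewrite card_ord.
lia.
Qed.

Lemma weight3 (w : 'rV[L]_n) a b c : dist3 a b c -> w \in C ->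
  w ord0 a = 0 -> w ord0 b = 0 -> w ord0 c = 0 -> w = 0.
Proof. by move=> d wC wa wb wc; apply: (agree3 d) => //; rewrite mxE. Qed.

Lemma exists3 a b c (xa xb xc : L) : dist3 a b c ->
  exists2 w, w \in C & [/\ w ord0 a = xa, w ord0 b = xb & w ord0 c = xc].
Proof.
move=> d.
pose F (w : 'rV[L]_n) := (w ord0 a, w ord0 b, w ord0 c).
have Finj : {in C &, injective F}.
  by move=> x y xC yC [ea eb ec]; apply: (agree3 d).
have : F @: C = [set: L * L * L].
  apply/eqP; rewrite eqEcard subsetT card_in_imset // cardsT Ccard !card_prod.
  by rewrite /= !expnS expn0 muln1 mulnA.
move/setP/(_ (xa, xb, xc)); rewrite inE => /imsetP [w wC e].
by exists w => //; case: e => -> -> ->.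
Qed.


Definition E (a b c : 'I_n) (x : L) : 'rV[L]_n :=
  odflt 0 [pick w in C | [&& w ord0 a == x, w ord0 b == 0 & w ord0 c == 0]].

Lemma E_spec a b c x : dist3 a b c ->
  [/\ E a b c x \in C, E a b c x ord0 a = x, E a b c x ord0 b = 0 & E a b c x ord0 c = 0].
Proof.
move=> d; rewrite /E; case: pickP => [w /andP [wC /and3P [/eqP -> /eqP -> /eqP ->]] //|].
have [w wC [wa wb wc]] := exists3 x 0 0 d.
by move/(_ w); rewrite wC wa wb wc !eqxx.
Qed.

Lemma dist3_swap a b c : dist3 a b c -> dist3 a c b.
Proof. by case/and3P => ab ac bc; rewrite /dist3 ab ac eq_sym bc. Qed.
Lemma dist3_rot a b c : dist3 a b c -> dist3 b a c.
Proof. by case/and3P => ab ac bc; rewrite /dist3 eq_sym ab ac bc. Qed.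

Lemma E_sym a b c x : dist3 a b c -> E a c b x = E a b c x.
Proof.
move=> d; have [e1 e2 e3 e4] := E_spec x d; have [f1 f2 f3 f4] := E_spec x (dist3_swap d).
by apply: (agree3 d) => //; rewrite ?f2 ?f3 ?f4 ?e2 ?e3 ?e4.
Qed.

Lemma E_uniq a b c (w : 'rV[L]_n) : dist3 a b c -> w \in C ->
  w ord0 b = 0 -> w ord0 c = 0 -> w = E a b c (w ord0 a).
Proof.
move=> d wC wb wc; have [e1 e2 e3 e4] := E_spec (w ord0 a) d.
by apply: (agree3 d) => //; rewrite ?e2 ?e3 ?e4.
Qed.

Lemma E_add a b c x y : dist3 a b c -> E a b c (x + y) = E a b c x + E a b c y.
Proof.
move=> d; have [e1 e2 e3 e4] := E_spec x d; have [f1 f2 f3 f4] := E_spec y d.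
rewrite [RHS](E_uniq d); rewrite ?CD ?mxE ?e2 ?f2 ?e3 ?f3 ?e4 ?f4 ?addr0 //.
Qed.

Lemma E_0 a b c : dist3 a b c -> E a b c 0 = 0.
Proof. by move=> d; have := E_add 0 0 d; rewrite addr0 => /eqP; rewrite addrC -subr_eq subrr eq_sym => /eqP. Qed.

Lemma E_opp a b c x : dist3 a b c -> E a b c (- x) = - E a b c x.
Proof. by move=> d; apply/eqP; rewrite -subr_eq0 opprK -E_add // addNr E_0. Qed.

Lemma E_Z a b c cc x : dist3 a b c -> inFq q cc -> E a b c (cc * x) = cc *: E a b c x.
Proof.
move=> d cq; have [e1 e2 e3 e4] := E_spec x d.
rewrite [RHS](E_uniq d) ?CZ // !mxE ?e2 ?e3 ?e4 ?mulr0 //.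
Qed.

Lemma decomp a b c (w : 'rV[L]_n) : dist3 a b c -> w \in C ->
  w = E a b c (w ord0 a) + E b a c (w ord0 b) + E c a b (w ord0 c).
Proof.
move=> d wC.
have d2 := dist3_rot d; have d3 : dist3 c a b by case/and3P: d => ab ac bc; rewrite /dist3 eq_sym ac eq_sym bc ab.
have [e1 e2 e3 e4] := E_spec (w ord0 a) d.
have [f1 f2 f3 f4] := E_spec (w ord0 b) d2.
have [g1 g2 g3 g4] := E_spec (w ord0 c) d3.
apply: (agree3 d) => //; rewrite ?CD // !mxE ?e2 ?e3 ?e4 ?f2 ?f3 ?f4 ?g2 ?g3 ?g4.
- by rewrite !addr0.
- by rewrite add0r addr0.
- by rewrite !add0r.
Qed.


Lemma skip_val (i : 'I_n) (j : 'I_n.-1) : val (skip i j) = bump i j.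
Proof.
rewrite /skip insubdK // -topredE /= /bump.
have := ltn_ord j; have := ltn_ord i; case: leqP => /= ij; lia.
Qed.

Lemma skip_surj (i t : 'I_n) : t != i -> exists j : 'I_n.-1, skip i j = t.
Proof.
move=> ti.
have lt : (unbump i t < n.-1)%N.
  have tin : (nat_of_ord t != nat_of_ord i) by [].
  have := ltn_ord t; have := ltn_ord i; rewrite /unbump.
  rewrite -subn1; case: (ltnP i t) => /= ? ? ?; lia.
exists (Ordinal lt); apply: val_inj; rewrite skip_val /= unbumpK // inE.
Qed.


Lemma proj_data (i : 'I_n) : equiv_to_linear q (proj C i) ->
  exists Th : 'I_n -> L -> L,
    (forall t, t != i -> Fq_linear q (Th t) /\ bijective (Th t)) /\
    (forall w lam, w \in C -> w ord0 i = 0 -> exists2 w', w' \in C &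
        w' ord0 i = 0 /\ forall t, t != i -> Th t (w' ord0 t) = lam * Th t (w ord0 t)).
Proof.
case=> D [[D0 DD DZ] [s [phi [phiP DE]]]].
pose J (t : 'I_n) := [pick j | skip i j == t].
have JP t : t != i -> exists2 j, J t = Some j & skip i j = t.
  move=> ti; rewrite /J; case: pickP => [j /eqP e|none]; first by exists j.
  by have [j e] := skip_surj ti; have := none j; rewrite e eqxx.
exists (fun t => if J t is Some j then phi (s^-1 j)%g else id); split.
  by move=> t /JP [j -> _]; apply: phiP.
move=> w lam wC wi.
pose r := \row_(j < n.-1) w ord0 (skip i j).
have rP : r \in proj C i by apply/imsetP; exists w; rewrite // inE wC wi eqxx.
pose d := \row_j0 phi j0 (r ord0 (s j0)).
have dD : d \in D by rewrite DE; apply/imsetP; exists r.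
have := DZ lam d dD; rewrite {1}DE => /imsetP [r' /imsetP [w' w'P ->] e].
move: w'P; rewrite inE => /andP [w'C /eqP w'i].
exists w' => //; split => // t /JP [j -> sj].
have := congr1 (fun M : 'rV[L]_(n.-1) => M ord0 (s^-1 j)%g) e.
by rewrite /d /r !mxE permKV sj.
Qed.


Definition Ec a b c (t : 'I_n) (x : L) := E a b c x ord0 t.

Lemma Ec_lin a b c t : dist3 a b c -> Fq_linear q (Ec a b c t).
Proof.
move=> d; split => [x y|cc x cq]; rewrite /Ec; first by rewrite E_add // mxE.
by rewrite E_Z // mxE.
Qed.

Definition notin3 (t a b c : 'I_n) := [&& t != a, t != b & t != c].

Lemma Ec_inj a b c t : dist3 a b c -> notin3 t a b c -> injective (Ec a b c t).
Proof.
move=> d /and3P [ta tb tc] x y e.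
have [e1 e2 e3 e4] := E_spec (x - y) d.
have : E a b c (x - y) = 0.
  apply: (weight3 (a := b) (b := c) (c := t)) => //.
    by case/and3P: d => _ _ bc; rewrite /dist3 bc eq_sym tb eq_sym tc.
  by rewrite E_add // E_opp // mxE mxE; move: e; rewrite /Ec => ->; rewrite subrr.
by move/(congr1 (fun w : 'rV[L]_n => w ord0 a)); rewrite e2 mxE => /eqP; rewrite subr_eq0 => /eqP.
Qed.

Lemma Ec_bij a b c t : dist3 a b c -> notin3 t a b c -> bijective (Ec a b c t).
Proof. by move=> d nt; apply: injF_bij; apply: Ec_inj. Qed.


Section ProjRel.
Variables (i j l : 'I_n) (Th : 'I_n -> L -> L).
Hypotheses (d : dist3 i j l)
  (ThL : forall t, t != i -> Fq_linear q (Th t) /\ bijective (Th t))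
  (ThP : forall w lam, w \in C -> w ord0 i = 0 -> exists2 w', w' \in C &
        w' ord0 i = 0 /\ forall t, t != i -> Th t (w' ord0 t) = lam * Th t (w ord0 t)).

Let dj : dist3 j i l.
Proof. exact: dist3_rot. Qed.
Let ji : j != i. Proof. by case/and3P: d; rewrite eq_sym. Qed.
Let li : l != i. Proof. by case/and3P: d => _; rewrite eq_sym. Qed.

Definition mu (t : 'I_n) := Th t (Ec j i l t 1) / Th j 1.

Lemma G1 t y : t != i -> Th t (Ec j i l t y) = mu t * Th j y.
Proof.
move=> ti.
have [Thjl [Thj' Thj1 Thj2]] := ThL ji.
have [Thll [Thl' Thl1 _]] := ThL li.
pose M u := Th t (Ec j i l t (Thj' u)).
have Mlin lam u : M (lam * u) = lam * M u.
  have [e1 e2 e3 e4] := E_spec (Thj' u) dj.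
  have [w' w'C [w'i w'P]] := ThP lam e1 e3.
  have w'l : w' ord0 l = 0.
    have := w'P l li; rewrite e4 (lin0 Thll) mulr0 => e.
    by apply: (can_inj Thl1); rewrite e (lin0 Thll).
  have w'j : w' ord0 j = Thj' (lam * u).
    by have := w'P j ji; rewrite e2 Thj2 => <-; rewrite Thj1.
  rewrite /M /Ec -w'j -(E_uniq dj w'C w'i w'l) w'P //.
have Mu u : M u = u * M 1 by rewrite -Mlin mulr1.
have Thj10 : Th j 1 != 0 by apply: (lin_inj0 Thjl (can_inj Thj1) (oner_neq0 _)).
have Ey y' : Th t (Ec j i l t y') = Th j y' * M 1 by rewrite -Mu /M Thj1.
by rewrite /mu !Ey; field.
Qed.

End ProjRel.




Lemma notin3_rot t a b c : notin3 t a b c -> notin3 t b a c.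
Proof. by case/and3P => *; apply/and3P. Qed.
Lemma notin3_swap t a b c : notin3 t a b c -> notin3 t a c b.
Proof. by case/and3P => *; apply/and3P. Qed.

Section Rel2.
Variables (i : 'I_n) (Th : 'I_n -> L -> L).
Hypotheses
  (ThL : forall t, t != i -> Fq_linear q (Th t) /\ bijective (Th t))
  (ThP : forall w lam, w \in C -> w ord0 i = 0 -> exists2 w', w' \in C &
        w' ord0 i = 0 /\ forall t, t != i -> Th t (w' ord0 t) = lam * Th t (w ord0 t)).

Lemma mu_nz j l t : dist3 i j l -> notin3 t i j l -> mu i j l Th t != 0.
Proof.
move=> d nt; have ti : t != i by case/and3P: nt.
have ji : j != i by case/and3P: d; rewrite eq_sym.
have [Thjl [Thj' Thj1 Thj2]] := ThL ji.
have [Thtl [Tht' Tht1 Tht2]] := ThL ti.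
have Thj10 : Th j 1 != 0 by apply: (lin_inj0 Thjl (can_inj Thj1) (oner_neq0 _)).
rewrite /mu mulf_eq0 invr_eq0 negb_or Thj10 andbT.
apply: (lin_inj0 Thtl (can_inj Tht1)).
apply: (lin_inj0 (Ec_lin t (dist3_rot d))) (oner_neq0 _).
by apply: Ec_inj; [apply: dist3_rot | apply: notin3_rot].
Qed.


Definition rr j l t := mu i l j Th t / mu i j l Th t.

Lemma REL j l t y z : dist3 i j l -> notin3 t i j l ->
  (Ec j i l t y == Ec l i j t z) = (Th j y == rr j l t * Th l z).
Proof.
move=> d nt; have ti : t != i by case/and3P: nt.
have [Thtl [Tht' Tht1 Tht2]] := ThL ti.
have mj := mu_nz d nt.
rewrite -(inj_eq (can_inj Tht1)) (G1 d ThL ThP _ ti) (G1 (dist3_swap d) ThL ThP _ ti).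
apply/eqP/eqP => e.
  by apply: (mulfI mj); rewrite e /rr; field.
by rewrite e /rr; field.
Qed.

Lemma rr_nz j l t : dist3 i j l -> notin3 t i j l -> rr j l t != 0.
Proof.
move=> d nt; rewrite /rr mulf_eq0 invr_eq0 negb_or (mu_nz d nt) andbT.
by apply: mu_nz; [apply: dist3_swap | apply: notin3_swap].
Qed.

Lemma REL_inj j l t t' : dist3 i j l -> notin3 t i j l -> notin3 t' i j l ->
  t != t' -> rr j l t != rr j l t'.
Proof.
move=> d nt nt' tt'; apply/negP => /eqP r_eq.
have ji : j != i by case/and3P: d; rewrite eq_sym.
have li : l != i by case/and3P: d => _; rewrite eq_sym.
have [Thjl [Thj' Thj1 Thj2]] := ThL ji.
have [Thll [Thl' Thl1 Thl2]] := ThL li.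
set z := Thl' 1; set y := Thj' (rr j l t).
have Ht : Ec j i l t y = Ec l i j t z.
  by apply/eqP; rewrite REL // /y /z Thj2 Thl2 mulr1.
have Ht' : Ec j i l t' y = Ec l i j t' z.
  by apply/eqP; rewrite REL // /y /z Thj2 Thl2 mulr1 r_eq.
have dj := dist3_rot d.
have dl : dist3 l i j by case/and3P: d => ij il jl; rewrite /dist3 eq_sym il eq_sym jl ij.
have [e1 e2 e3 e4] := E_spec y dj.
have [f1 f2 f3 f4] := E_spec z dl.
have w0 : E j i l y - E l i j z = 0.
  apply: (weight3 (a := i) (b := t) (c := t')); rewrite ?CB //.
  - by case/and3P: nt => ti _ _; case/and3P: nt' => t'i _ _; rewrite /dist3 eq_sym ti eq_sym t'i tt'.
  - by rewrite !mxE e3 f3 subrr.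
  - by rewrite !mxE; move: Ht; rewrite /Ec => ->; rewrite subrr.
  - by rewrite !mxE; move: Ht'; rewrite /Ec => ->; rewrite subrr.
have := congr1 (fun w : 'rV[L]_n => w ord0 l) w0; rewrite !mxE e4 f2 sub0r => /eqP.
rewrite oppr_eq0 => /eqP z0.
have := Thl2 1; rewrite -/z z0 (lin0 Thll) => /eqP; by rewrite eq_sym oner_eq0.
Qed.

End Rel2.


Lemma main_code (h m : nat) (a b c : 'I_n) :
  (0 < m)%N -> (3 + m <= n)%N ->
  (forall T : L -> L, Fq_linear q T -> exists fa : 'I_h -> L, forall x, linpoly q fa x = T x) ->
  (forall fa : 'I_h -> L, lp_monomial fa ->
     exists e : nat, forall bb x, linpoly q fa (bb * x) = bb ^+ e * linpoly q fa x) ->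
  (forall f g : 'I_h -> L, lp_invertible q f -> lp_invertible q g -> Prop_m q m f g ->
     lp_monomial f /\ lp_monomial g) ->
  a != b -> a != c -> b != c ->
  equiv_to_linear q (proj C a) -> equiv_to_linear q (proj C b) -> equiv_to_linear q (proj C c) ->
  equiv_to_linear q C.
Proof.
move=> m0 nm REP MONO HYP ab ac bc Pa Pb Pc.
have mn3 : (m <= n - 3)%N by lia.
have n30 : (0 < n - 3)%N by lia.
have d : dist3 a b c by rewrite /dist3 ab ac bc.
have dbac : dist3 b a c by rewrite /dist3 eq_sym ab bc ac.
have dcab : dist3 c a b by rewrite /dist3 eq_sym ac eq_sym bc ab.
have dcba : dist3 c b a by rewrite /dist3 eq_sym bc eq_sym ac eq_sym ab.
have [Tha [ThaL ThaP]] := proj_data Pa.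
have [Thb [ThbL ThbP]] := proj_data Pb.
have [Thc [ThcL ThcP]] := proj_data Pc.
pose K t := notin3 t a b c.
have KE t : K t -> [/\ notin3 t c a b, notin3 t b a c, notin3 t a b c & notin3 t c b a].
  by rewrite /K => /and3P [ta tb tc]; split; apply/and3P.
pose tau := rr c Thc a b. pose sig := rr b Thb a c. pose rho := rr a Tha b c.
pose Ak t := Ec a b c t. pose Bk t := Ec b a c t. pose Ck t := Ec c a b t.
have HAB t : K t -> forall x y, (Ak t x == Bk t y) = (Thc a x == tau t * Thc b y).
  move=> /KE [n1 n2 n3 n4'] x y; rewrite -(REL ThcL ThcP x y dcab n1).
  by rewrite /Ak /Bk /Ec (E_sym _ d) (E_sym _ dbac).
have HAC t : K t -> forall x z, (Ak t x == Ck t z) = (Thb a x == sig t * Thb c z).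
  move=> /KE [n1 n2 n3 n4'] x z; rewrite -(REL ThbL ThbP x z dbac n2).
  by rewrite /Ak /Ck /Ec (E_sym _ dcab).
have HBC t : K t -> forall y z, (Bk t y == Ck t z) = (Tha b y == rho t * Tha c z).
  by move=> /KE [n1 n2 n3 n4'] y z; rewrite -(REL ThaL ThaP y z d n3).
have sA t : K t -> forall w, exists x, Ak t x = w.
  by move=> /KE [_ _ n3 _] w; have [Ai _ AK'] := Ec_bij d n3; exists (Ai w); rewrite /Ak AK'.
have sB t : K t -> forall w, exists y, Bk t y = w.
  by move=> /KE [_ n2 _ _] w; have [Bi _ BK'] := Ec_bij dbac n2; exists (Bi w); rewrite /Bk BK'.
have [X1l [X1i X1K X1K']] := ThcL a ac.
have [X2l [X2i X2K X2K']] := ThcL b bc.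
have [Phi1l [Phi1i Phi1K Phi1K']] := ThbL a ab.
have cb : c != b by rewrite eq_sym.
have ca : c != a by rewrite eq_sym.
have ba : b != a by rewrite eq_sym.
have [Phi3l [Phi3i Phi3K Phi3K']] := ThbL c cb.
have [Th2l [Th2i Th2K Th2K']] := ThaL b ba.
have [Th3l [Th3i Th3K Th3K']] := ThaL c ca.
pose Ks := [set t | K t].
have cardKs : #|Ks| = (n - 3)%N.
  have -> : Ks = ~: [set a; b; c].
    by apply/setP => t; rewrite /Ks in_setC !in_setU !in_set1 inE /K /notin3 !negb_or andbA.
  have cZ : #|[set a; b; c]| = 3%N.
    by rewrite -setUA cardsU1 cards2 bc !inE negb_or ab ac.
  have := cardsC [set a; b; c]; rewrite cZ => e.
  by rewrite -(addKn 3 #|~: _|) e cardT size_enum_ord.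
pose ks := enum Ks.
have szks : size ks = (n - 3)%N by rewrite /ks -cardE cardKs.
pose e (j : nat) := nth a ks j.
have eK j : (j < n - 3)%N -> K (e j).
  move=> jn; have : (j < size ks)%N by rewrite szks.
  by move/(mem_nth a); rewrite -/(e j) mem_enum inE.
pose k0 := e 0%N.
have Kk0 : K k0 by apply: eK.
have tau0 : tau k0 != 0 by case/KE: Kk0 => n1 _ _ _; apply: (rr_nz ThcL dcab n1).
have sig0 : sig k0 != 0 by case/KE: Kk0 => _ n2 _ _; apply: (rr_nz ThbL dbac n2).
have rho0 : rho k0 != 0 by case/KE: Kk0 => _ _ n3 _; apply: (rr_nz ThaL d n3).
have CORE := core HAB HAC HBC sA sB X1K Phi1K Phi1K' Th2K Th3K' Kk0 tau0 sig0 rho0.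
pose f v := tau k0 * Thc b (Th2i (rho k0 * v)).
pose g u := Thc a (Phi1i (sig k0 * u)).
have fl : Fq_linear q f.
  apply: lin_scl; apply: (lin_comp X2l); apply: lin_scr; exact: lin_inv Th2l Th2K Th2K'.
have gl : Fq_linear q g.
  apply: (lin_comp X1l); apply: lin_scr; exact: lin_inv Phi1l Phi1K Phi1K'.
have fbij : bijective f.
  by apply: injF_bij => v v' /(mulfI tau0) /(can_inj X2K) /(can_inj Th2K') /(mulfI rho0).
have gbij : bijective g.
  by apply: injF_bij => v v' /(can_inj X1K) /(can_inj Phi1K') /(mulfI sig0).
have [fa faE] := REP f fl.
have [ga gaE] := REP g gl.
have Fbij : bijective (linpoly q fa) by apply: (eq_bij fbij) => x; rewrite faE.
have Gbij : bijective (linpoly q ga) by apply: (eq_bij gbij) => x; rewrite gaE.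
have ejK (j : 'I_m) : K (e j) by apply: eK; apply: leq_trans (ltn_ord j) mn3.
have PM : Prop_m q m fa ga.
  exists (fun j : 'I_m => tau (e j) / tau k0), (fun j => rho (e j) / rho k0),
    (fun j => sig (e j) / sig k0).
  split.
  - move=> j; have [n1 n2 n3 _] := KE _ (ejK j).
    by split; rewrite mulf_neq0 ?invr_eq0 //; apply: rr_nz.
  - move=> j /= j0; have ej : e j = k0 by rewrite /k0 /e j0.
    by rewrite ej !divff.
  - move=> j x.
    have Fv := f_finv (bij_inj Fbij) x; have Gu := f_finv (bij_inj Gbij) x.
    set v := finv (linpoly q fa) x in Fv *; set u := finv (linpoly q ga) x in Gu *.
    have e1 : g u = f v by rewrite -gaE -faE Fv Gu.
    rewrite !faE !gaE; symmetry; exact: (CORE (e j) u v (ejK j) e1).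
  - have einj (j j' : 'I_m) : e j = e j' -> j = j'.
      move=> ee; apply: val_inj => /=; apply/eqP.
      rewrite -(nth_uniq a _ _ (enum_uniq (pred_of_set Ks))) -/ks ?szks //.
      + by apply/eqP.
      + by apply: leq_trans (ltn_ord j) mn3.
      + by apply: leq_trans (ltn_ord j') mn3.
    split.
    + move=> j j' /= /(mulIf (invr_neq0 tau0)) ee; apply: einj.
      apply/eqP/negPn/negP => ne; have [n1 _ _ _] := KE _ (ejK j); have [n1' _ _ _] := KE _ (ejK j').
      exact: (elimN eqP (REL_inj ThcL ThcP dcab n1 n1' ne) ee).
    + move=> j j' /= /(mulIf (invr_neq0 rho0)) ee; apply: einj.
      apply/eqP/negPn/negP => ne; have [_ _ n1 _] := KE _ (ejK j); have [_ _ n1' _] := KE _ (ejK j').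
      exact: (elimN eqP (REL_inj ThaL ThaP d n1 n1' ne) ee).
    + move=> j j' /= /(mulIf (invr_neq0 sig0)) ee; apply: einj.
      apply/eqP/negPn/negP => ne; have [_ n1 _ _] := KE _ (ejK j); have [_ n1' _ _] := KE _ (ejK j').
      exact: (elimN eqP (REL_inj ThbL ThbP dbac n1 n1' ne) ee).
have [monof _] := HYP fa ga Fbij Gbij PM.
have [ee fsemi] := MONO fa monof.
have fS bb x : f (bb * x) = bb ^+ ee * f x by rewrite -!faE fsemi.
pose th3 z := f (Tha c z).
have th3l : Fq_linear q th3 by apply: (lin_comp fl Th3l).
have th3bij : bijective th3.
  by apply: injF_bij => z z' /(bij_inj fbij) /(can_inj Th3K).
have [th3i th3K th3K'] := th3bij.
have Ktc t : K t -> t != c by case/and3P.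
have GA t x : K t -> Thc t (Ak t x) = mu c a b Thc t * Thc a x.
  move=> Kt; rewrite /Ak /Ec -(E_sym _ d).
  exact: (G1 dcab ThcL ThcP x (Ktc t Kt)).
have GB t y : K t -> Thc t (Bk t y) = mu c b a Thc t * Thc b y.
  move=> Kt; rewrite /Bk /Ec -(E_sym _ dbac).
  exact: (G1 dcba ThcL ThcP y (Ktc t Kt)).
have FS t z : K t -> Thc t (Ck t z) = (mu c b a Thc t / tau k0 * (rho t / rho k0) ^+ ee) * th3 z.
  move=> Kt; have [y ey] := sB t Kt (Ck t z).
  have hbc : Tha b y = rho t * Tha c z by apply/eqP; rewrite -HBC // ey.
  have e2 : rho k0 * (rho t / rho k0 * Tha c z) = rho t * Tha c z by field.
  have hf : tau k0 * Thc b y = (rho t / rho k0) ^+ ee * th3 z.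
    by rewrite /th3 -fS /f e2 -hbc Th2K.
  by rewrite -ey GB // -[Thc b y](mulKf tau0) hf; field.
pose th t := if t == c then th3 else Thc t.
have thL t : Fq_linear q (th t) /\ bijective (th t).
  by rewrite /th; case: eqP => [_|/eqP tc]; [split | exact: ThcL].
pose D := [set \row_i th i (x ord0 ((1%g : 'S_n) i)) | x : 'rV[L]_n in C].
exists D; split; last by exists 1%g, th; split.
have [e1 e2 e3 e4] := E_spec 0 d.
split.
- apply/imsetP; exists 0 => //; apply/rowP => t; rewrite !mxE ?perm1.
  by case: (thL t) => tl _; rewrite (lin0 tl).
- move=> _ _ /imsetP [w1 w1C ->] /imsetP [w2 w2C ->]; apply/imsetP; exists (w1 + w2).
    exact: CD.
  by apply/rowP => t; rewrite !mxE ?perm1; case: (thL t) => [[tD _] _]; rewrite tD.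
move=> lam _ /imsetP [w wC ->].
pose x' := X1i (lam * Thc a (w ord0 a)).
pose y' := X2i (lam * Thc b (w ord0 b)).
pose z' := th3i (lam * th3 (w ord0 c)).
have [ea1 ea2 ea3 ea4] := E_spec x' d.
have [eb1 eb2 eb3 eb4] := E_spec y' dbac.
have [ec1 ec2 ec3 ec4] := E_spec z' dcab.
pose w' := E a b c x' + E b a c y' + E c a b z'.
have w'C : w' \in C by rewrite !CD.
apply/imsetP; exists w' => //; apply/rowP => t; rewrite !mxE ?perm1.
rewrite /th; case: eqP => [->|/eqP tc].
  by rewrite ea4 eb4 ec2 !add0r /z' th3K'.
have [->|ta] := eqVneq t a.
  by rewrite ea2 eb3 ec3 !addr0 /x' X1K'.
have [->|tb] := eqVneq t b.
  by rewrite ea3 eb2 ec4 addr0 add0r /y' X2K'.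
have Kt : K t by rewrite /K /notin3 ta tb tc.
have [[TD _] _] := ThcL t tc.
rewrite [in LHS](decomp d wC) !mxE !TD.
rewrite -[E a b c x' ord0 t]/(Ak t x') -[E b a c y' ord0 t]/(Bk t y') -[E c a b z' ord0 t]/(Ck t z').
rewrite -[E a b c _ ord0 t]/(Ak t _) -[E b a c _ ord0 t]/(Bk t _) -[E c a b _ ord0 t]/(Ck t _).
rewrite !GA // !GB // !FS // /x' /y' /z' X1K' X2K' th3K'.
ring.
Qed.

End Code.


Theorem lemma5p10 (L : finFieldType) (q h m : nat) :
  (exists p k : nat, [/\ prime p, (0 < k)%N & q = (p ^ k)%N]) ->
  (0 < h)%N -> (0 < m)%N -> #|L| = (q ^ h)%N ->
  (forall f g : 'I_h -> L,
      lp_invertible q f -> lp_invertible q g -> Prop_m q m f g ->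
      lp_monomial f /\ lp_monomial g) ->
  forall (n : nat) (C : {set 'rV[L]_n}),
    (3 + m <= n)%N ->
    Fq_code q C -> #|C| = (q ^ (3 * h))%N -> min_dist C (n - 2) ->
    (exists i1 i2 i3 : 'I_n,
        [/\ i1 != i2, i1 != i3, i2 != i3 &
            [/\ equiv_to_linear q (proj C i1), equiv_to_linear q (proj C i2)
              & equiv_to_linear q (proj C i3)]]) ->
    equiv_to_linear q C.
Proof.
move=> [p [k [pP k0 qE]]] h0 m0 Lcard HYP n C nm [C0 CD CZ] Ccard [_ Cmin]
  [a [b [c [ab ac bc [Pa Pb Pc]]]]].
subst q.
have Cm1 : inFq (p ^ k) (-1 : L) by rewrite /inFq (frobN1 pP k0 Lcard) expr1n.
have n4 : (3 < n)%N by apply: leq_trans nm; rewrite -addn1 leq_add2l.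
have Ccard' : #|C| = (#|L| ^ 3)%N by rewrite Ccard Lcard -[in RHS]expnM mulnC.
apply: (main_code n4 C0 CD CZ Cm1 Cmin Ccard' m0 nm _ _ HYP ab ac bc Pa Pb Pc).
- by move=> T Tl; apply: (rep_lin pP k0 h0 Lcard Tl).
- by move=> fa fm; apply: mono_semi.
Qed.
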